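(* Let $p$ be an odd prime, let $G$ be a finite $p$-group and let $N$ be a normal subgroup of $G$. If $N$ is powerful, then $\exp(N\wedge G)$ divides $\exp(N)$.
   Context: For odd $p$, a finite $p$-group $N$ is powerful if $[N,N]\subseteq N^p$, where $N^p$ is the subgroup generated by $p$-th powers. Conventions: ${}^g h = ghg^{-1}$, $[g,h]=ghg^{-1}h^{-1}$. For $N\trianglelefteq G$, the nonabelian tensor product $N\otimes G$ (with actions by conjugation) is the group generated by symbols $n\otimes g$ ($n\in N$, $g\in G$) subject to $nn'\otimes g=({}^n n'\otimes {}^n g)(n\otimes g)$ and $n\otimes gg'=(n\otimes g)({}^g n\otimes {}^g g')$; the exterior product $N\wedge G$ is its quotient by the subgroup generated by all $x\otimes x$, $x\in N$. *)

(* Defs.v *)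
From mathcomp Require Import all_boot all_fingroup all_solvable.
From mathcomp Require Import pgroup abelian commutator.
Set Implicit Arguments. Unset Strict Implicit. Unset Printing Implicit Defensive.
Local Open Scope group_scope.

Definition lconj (gT : finGroupType) (g h : gT) : gT := g * h * g^-1.

Definition ppow_subgroup (gT : finGroupType) (p : nat) (N : {set gT}) : {set gT} :=
  <<[set x ^+ p | x in N]>>.

Definition powerful (gT : finGroupType) (p : nat) (N : {set gT}) : Prop :=
  [~: N, N] \subset ppow_subgroup p N.

(* Words in the free group on symbols n (x) g: a letter (b,(n,g)) stands for
   (n (x) g) if b = false and (n (x) g)^-1 if b = true. *)
Definition letter (gT : finGroupType) := (bool * (gT * gT))%type.
Definition word (gT : finGroupType) := seq (letter gT).
Definition gen (gT : finGroupType) (n g : gT) : letter gT := (false, (n, g)).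
Definition linv (gT : finGroupType) (l : letter gT) : letter gT := (~~ l.1, l.2).

(* The congruence on words whose quotient is the nonabelian exterior product
   N /\ G: free-group cancellation, the two tensor relations for n,n' in N and
   g,g' in G, and the exterior relations x (x) x = 1 for x in N. *)
Inductive ext_eq (gT : finGroupType) (N G : {set gT}) : word gT -> word gT -> Prop :=
  | ext_refl u : ext_eq N G u u
  | ext_sym u v : ext_eq N G u v -> ext_eq N G v u
  | ext_trans u v w : ext_eq N G u v -> ext_eq N G v w -> ext_eq N G u w
  | ext_ctx a b u v : ext_eq N G u v -> ext_eq N G (a ++ u ++ b) (a ++ v ++ b)
  | ext_cancel l : ext_eq N G [:: l; linv l] [::]
  | ext_rel1 n n' g : n \in N -> n' \in N -> g \in G ->
      ext_eq N G [:: gen (n * n') g]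
                 [:: gen (lconj n n') (lconj n g); gen n g]
  | ext_rel2 n g g' : n \in N -> g \in G -> g' \in G ->
      ext_eq N G [:: gen n (g * g')]
                 [:: gen n g; gen (lconj g n) (lconj g g')]
  | ext_diag x : x \in N -> ext_eq N G [:: gen x x] [::].

Definition ext_word (gT : finGroupType) (N G : {set gT}) (w : word gT) : bool :=
  all (fun l : letter gT => (l.2.1 \in N) && (l.2.2 \in G)) w.

Definition ext_exp_dvd (gT : finGroupType) (N G : {set gT}) (e : nat) : Prop :=
  forall w : word gT, ext_word N G w -> ext_eq N G (flatten (nseq e w)) [::].

(* Main.v *)
Require Import Defs.
From mathcomp Require Import all_boot all_fingroup all_solvable.
From mathcomp Require Import pgroup abelian commutator.
From Stdlib Require Import Setoid Morphisms.
Set Implicit Arguments. Unset Strict Implicit. Unset Printing Implicit Defensive.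
Local Open Scope group_scope.

Lemma bin2_odd' q : odd q -> 'C(q, 2) = (q * q.-1./2)%N.
Proof.
case: q => // q /= oq.
by rewrite bin2 /= -{2}(odd_double_half q) (negbTE oq) add0n -doubleMr doubleK.
Qed.

Section P1.
Variable gT : finGroupType.
Variable p : nat.
Hypothesis oddp : odd p.

Definition pp (H : {set gT}) : {group gT} := <<[set x ^+ p | x in H]>>%G.

Lemma pp_sub (H : {group gT}) : pp H \subset H.
Proof. by rewrite gen_subG; apply/subsetP => _ /imsetP[x xH ->]; apply: groupX. Qed.
Lemma mem_pp (H : {set gT}) x : x \in H -> x ^+ p \in pp H.
Proof. by move=> xH; apply: mem_gen; apply: imset_f. Qed.
Lemma ppS (H K : {set gT}) : H \subset K -> pp H \subset pp K.
Proof. by move=> sHK; apply: genS; apply: imsetS. Qed.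
Lemma pp_norm (G H : {group gT}) : G \subset 'N(H) -> G \subset 'N(pp H).
Proof.
move=> nHG; apply: norms_gen; apply/subsetP => g gG; rewrite inE.
apply/subsetP => y; rewrite mem_conjg => /imsetP[x xH Ey].
have -> : y = (x ^ g) ^+ p by rewrite -conjXg -Ey conjgKV.
by apply: imset_f; rewrite memJ_norm // (subsetP nHG).
Qed.
Lemma pp_normal (G H : {group gT}) : H <| G -> pp H <| G.
Proof.
case/andP=> sHG nHG; apply/andP; split; last exact: pp_norm.
exact: subset_trans (pp_sub H) sHG.
Qed.

Lemma absorb (H X W : {group gT}) : nilpotent H -> X \subset H -> H \subset 'N(X) ->
  W <| H -> X \subset W * [~: X, H] -> X \subset W.
Proof.
move=> nilH sXH nXH /andP[sWH nWH] sub.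
have nWX : X \subset 'N(W) by apply: subset_trans nWH.
rewrite -quotient_sub1 //.
case: (eqVneq (X / W) 1) => [-> // | ntX].
have nilHb := quotient_nil W nilH.
have sXHb : X / W \subset H / W by apply: quotientS.
have nXHb : H / W \subset 'N_(H / W)(X / W).
  by rewrite subsetI subxx quotient_norms.
have := nil_comm_properl nilHb sXHb ntX nXHb.
rewrite -quotientR //.
have : X / W \subset [~: X, H] / W.
  by rewrite -(quotientMidl W [~: X, H]); apply: quotientS.
move=> H1 H2; have := proper_card H2; have := subset_leq_card H1.
by move=> a b; have := leq_trans b a; rewrite ltnn.
Qed.

Lemma core_pow (rT : finGroupType) (x c : rT) : c ^+ p = 1 ->
  commute [~ c, x] c -> commute [~ c, x] x -> (x * c) ^+ p = x ^+ p.
Proof.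
move=> cp1 h1 h2.
rewrite expMg_Rmul; [| exact: commute_sym | exact: commute_sym].
rewrite cp1 mulg1.
have : [~ c ^+ p, x] = [~ c, x] ^+ p by apply: commXg; apply: commute_sym.
rewrite cp1 comm1g => E.
by rewrite bin2_odd' // expgM -E expg1n mulg1.
Qed.

Lemma cosetM (K : {group gT}) x y : x \in 'N(K) -> y \in 'N(K) ->
  coset K (x * y) = coset K x * coset K y.
Proof. exact: morphM. Qed.
Lemma cosetX (K : {group gT}) x n : x \in 'N(K) -> coset K (x ^+ n) = coset K x ^+ n.
Proof. exact: morphX. Qed.
Lemma cosetV (K : {group gT}) x : x \in 'N(K) -> coset K x^-1 = (coset K x)^-1.
Proof. exact: morphV. Qed.
Lemma cosetR (K : {group gT}) x y : x \in 'N(K) -> y \in 'N(K) ->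
  coset K [~ x, y] = [~ coset K x, coset K y].
Proof. exact: morphR. Qed.

Section LA.
Variable H : {group gT}.
Hypothesis nilH : nilpotent H.
Hypothesis powH : [~: H, H] \subset pp H.

Let P := pp H.
Let W := pp P.
Lemma nPH : P <| H. Proof. exact: pp_normal (normal_refl H). Qed.
Lemma nWH : W <| H. Proof. exact: pp_normal nPH. Qed.

Lemma LA : [~: P, H] \subset W.
Proof.
have [sPH nPH'] := andP nPH; have [sWH nWH'] := andP nWH.
set X := [~: P, H].
have sXH : X \subset H by rewrite commg_subr (subset_trans sPH (normG H)).
have nXH : H \subset 'N(X) by rewrite normsR.
have nXHH : H \subset 'N([~: X, H]) by rewrite normsR.
have sXHH : [~: X, H] \subset H by rewrite commg_subr (subset_trans sXH (normG H)).
set K := (W <*> [~: X, H])%G.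
have nKH : H \subset 'N(K) by rewrite /K /= normsY // normsR.
have sWK : W \subset K by exact: joing_subl.
have sXHK : [~: X, H] \subset K by exact: joing_subr.
have nK : forall h, h \in H -> h \in 'N(K) by move=> h hH; apply: (subsetP nKH).
have cent : forall z h, z \in X -> h \in H -> commute (coset K z) (coset K h).
  move=> z h zX hH; apply/commgP.
  have zH : z \in H by apply: (subsetP sXH).
  rewrite -morphR ?nK //; apply/eqP.
  change (coset K [~ z, h] = 1); apply: coset_id.
  by apply: (subsetP sXHK); apply: mem_commg.
have sXK : X \subset K.
  rewrite -quotient_cents2 ?(subset_trans sPH nKH) //.
  rewrite /P /pp /= quotient_gen; last first.
    by apply: subset_trans nKH; rewrite -gen_subG; exact: pp_sub.
  rewrite gen_subG; apply/subsetP => _ /morphimP[y yN yS ->].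
  case/imsetP: yS => x xH ->.
  apply/centP => _ /morphimP[g gN gH ->].
  have cxgP : [~ x, g] \in P by apply: (subsetP powH); apply: mem_commg.
  have cxgH : [~ x, g] \in H by apply: (subsetP sPH).
  apply/commgP; apply/conjg_fixP.
  rewrite morphX ?nK // conjXg conjg_mulR; apply: core_pow.
  - rewrite -morphR ?nK // -morphX ?nK ?groupR //.
    change (coset K ([~ x, g] ^+ p) = 1); apply: coset_id.
    by apply: (subsetP sWK); apply: mem_pp.
  - rewrite -!morphR ?nK ?groupR //; apply: cent => //.
    by apply: mem_commg.
  - rewrite -!morphR ?nK ?groupR //; apply: cent => //.
    by apply: mem_commg.
apply: (absorb nilH sXH nXH nWH).
by rewrite -norm_joinEr // (subset_trans sXHH nWH').
Qed.

Lemma powerful_pp : [~: P, P] \subset pp P.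
Proof.
apply: subset_trans LA; apply: commgS; exact: pp_sub.
Qed.


Lemma nWall h : h \in H -> h \in 'N(W).
Proof. by move=> hH; apply: (subsetP (normal_norm nWH)). Qed.

Lemma powmod a b : a \in H -> b \in H ->
  coset W ((b * a) ^+ p) = coset W (b ^+ p * a ^+ p).
Proof.
move=> aH bH; have [sPH nPH'] := andP nPH.
have abP : [~ a, b] \in P by apply: (subsetP powH); apply: mem_commg.
have abH : [~ a, b] \in H by apply: (subsetP sPH).
have cm : forall u, u \in H -> commute [~ coset W a, coset W b] (coset W u).
  move=> u uH; apply/commgP; rewrite -!cosetR ?nWall ?groupR //; apply/eqP.
  apply: coset_id.
  by apply: (subsetP LA); apply: mem_commg.
rewrite cosetX ?cosetM ?cosetX ?nWall ?groupX ?groupM //.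
rewrite expMg_Rmul; [| exact: commute_sym (cm _ aH) | exact: commute_sym (cm _ bH)].
have E : [~ coset W a, coset W b] ^+ p = 1.
  rewrite -cosetR ?nWall // -cosetX ?nWall ?groupR //.
  by apply: coset_id; apply: mem_pp.
by rewrite bin2_odd' // expgM E expg1n mulg1.
Qed.

Lemma step1 y : y \in P -> exists2 z, z \in H & exists2 w, w \in W & y = z ^+ p * w.
Proof.
move=> yP; have [sPH nPH'] := andP nPH.
set T := [set coset W (z ^+ p) | z in H].
have gT_ : group_set T.
  apply/group_setP; split.
    by apply/imsetP; exists 1; rewrite ?group1 // expg1n morph1.
  move=> _ _ /imsetP[a aH ->] /imsetP[b bH ->].
  apply/imsetP; exists (a * b); first by rewrite groupM.
  by rewrite -cosetM ?nWall ?groupX // -powmod.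
set Tg := Group gT_.
have sPQ : P \subset coset W @*^-1 Tg.
  change (<<[set x ^+ p | x in H]>> \subset coset W @*^-1 Tg).
  rewrite gen_subG; apply/subsetP => _ /imsetP[z zH ->].
  rewrite inE; apply/andP; split; first by rewrite nWall ?groupX.
  by rewrite inE; apply: imset_f.
have := subsetP sPQ y yP; rewrite inE => /andP[yN]; rewrite inE => /imsetP[z zH Ez].
exists z => //; exists ((z ^+ p)^-1 * y); last by rewrite mulKVg.
apply: coset_idr; first by rewrite groupM ?groupV ?nWall ?groupX // (subsetP sPH).
by rewrite cosetM ?cosetV ?groupV ?nWall ?groupX // ?(subsetP sPH) // -Ez mulVg.
Qed.

End LA.


Lemma LM (pr : prime p) n : forall H : {group gT}, #|H| <= n -> p.-group H ->
  [~: H, H] \subset pp H -> forall y, y \in pp H -> exists2 x, x \in H & y = x ^+ p.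
Proof.
elim: n => [|n IHn] H cardH pH powH y yP.
  by move: (cardG_gt0 H); rewrite ltnNge cardH.
have nilH := pgroup_nil pH.
have [z zH [w wW Ey]] := step1 nilH powH yP.
set P := pp H.
have [sPH nPH'] := andP (nPH H).
have nzP : <[z]> \subset 'N(P) by rewrite cycle_subG (subsetP nPH').
set M := (<[z]> <*> P)%G.
have sMH : M \subset H by rewrite join_subG cycle_subG zH sPH.
have zM : z \in M by apply: (subsetP (joing_subl _ _)); apply: cycle_id.
have sPM : P \subset M by apply: joing_subr.
case: (eqVneq (M : {set gT}) H) => [EM | neM].
  have sPPhi : P \subset 'Phi(H).
    by rewrite (Phi_joing pH) (MhoE 1 pH) expn1; apply: joing_subr.
  have EPhi : 'Phi(H) <*> <[z]> = H.
    apply/eqP; rewrite eqEsubset join_subG Phi_sub cycle_subG zH /=.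
    rewrite -{1}EM /M /= joingC; apply: genS; apply: setSU; exact: sPPhi.
  have Hz : <[z]> = H :> {set gT} by rewrite -(Phi_nongen EPhi) genGid.
  have sPz : P \subset <[z ^+ p]>.
    change (<<[set x ^+ p | x in H]>> \subset <[z ^+ p]>).
    rewrite gen_subG; apply/subsetP => _ /imsetP[x xH ->].
    rewrite -Hz in xH; case/cycleP: xH => i ->.
    by rewrite expgAC mem_cycle.
  case/cycleP: (subsetP sPz y yP) => j ->.
  by exists (z ^+ j); [rewrite groupX | rewrite expgAC].
have ltMH : #|M| < #|H| by apply: proper_card; rewrite properEneq neM sMH.
have pM := pgroupS sMH pH.
set L := [~: P, H].
have nLH : H \subset 'N(L) by rewrite normsR.
have powM : [~: M, M] \subset pp M.
  apply: subset_trans (ppS sPM).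
  apply: subset_trans (LA nilH powH).
  rewrite -derg1; apply: (der1_min (H := [~: P, H]%G)).
    exact: subset_trans sMH nLH.
  rewrite /M /= norm_joinEl // quotientMl ?cycle_subG ?(subsetP nLH) //.
  have -> : <[z]> / L * (P / L) = ((<[z]> / L)%G * (P / L)%G) by [].
  rewrite abelianM quotient_abelian ?cycle_abelian //=.
  rewrite quotient_cents2 ?(subset_trans sPH nLH) //; last first.
    by rewrite cycle_subG (subsetP nLH).
  rewrite commgS ?cycle_subG // andbT.
  by rewrite /abelian quotient_cents2 ?(subset_trans sPH nLH) // commgS.
have yM : y \in pp M.
  rewrite Ey groupM ?mem_pp //.
  by apply: (subsetP (ppS sPM)).
have [x xM ->] := IHn M (leq_trans ltMH cardH) pM powM y yM.
by exists x => //; apply: (subsetP sMH).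
Qed.

End P1.

Ltac gnorm := rewrite /lconj ?invMg ?invgK -?mulgA;
  repeat progress rewrite ?mulKg ?mulKVg ?mulgV ?mulVg ?mulg1 ?mul1g ?invg1.

Section Words.
Variable gT : finGroupType.
Variables N G : {group gT}.
Hypothesis nNG : N <| G.

Local Notation "u =w= v" := (ext_eq N G u v) (at level 70).

#[local] Hint Resolve ext_refl : core.
Lemma sNG : N \subset G. Proof. by case/andP: nNG. Qed.
Lemma inNG x : x \in N -> x \in G. Proof. exact: (subsetP sNG). Qed.
Lemma lconjN x n : x \in G -> n \in N -> lconj x n \in N.
Proof.
move=> xG nN; have -> : lconj x n = n ^ x^-1 by rewrite conjgE invgK /lconj mulgA.
by rewrite memJ_norm // groupV (subsetP (normal_norm nNG)).
Qed.
Lemma lconjG x g : x \in G -> g \in G -> lconj x g \in G.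
Proof. by move=> xG gG; rewrite /lconj !groupM ?groupV. Qed.

Global Instance ext_equiv : Equivalence (ext_eq N G).
Proof. split; [exact: ext_refl | exact: ext_sym | exact: ext_trans]. Qed.

Lemma ext_catl a u v : u =w= v -> a ++ u =w= a ++ v.
Proof. by move=> H; have := ext_ctx a [::] H; rewrite !cats0. Qed.
Lemma ext_catr b u v : u =w= v -> u ++ b =w= v ++ b.
Proof. by move=> H; exact: (ext_ctx [::] b H). Qed.

Global Instance cat_proper : Proper (ext_eq N G ==> ext_eq N G ==> ext_eq N G) (@cat (letter gT)).
Proof.
move=> u u' Hu v v' Hv; transitivity (u' ++ v).
  exact: ext_catr. exact: ext_catl.
Qed.

Definition winv (w : word gT) : word gT := rev (map (@linv gT) w).
Lemma linvK : involutive (@linv gT). Proof. by case=> [[] [? ?]]. Qed.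
Lemma winv_cat u v : winv (u ++ v) = winv v ++ winv u.
Proof. by rewrite /winv map_cat rev_cat. Qed.
Lemma winvK : involutive winv.
Proof. by move=> w; rewrite /winv map_rev -map_comp revK (eq_map linvK) map_id. Qed.
Lemma winv_cons l w : winv (l :: w) = winv w ++ [:: linv l].
Proof. by rewrite /winv /= rev_cons cats1. Qed.

Lemma ext_cancel' l : [:: linv l; l] =w= [::].
Proof. by have := ext_cancel N G (linv l); rewrite linvK. Qed.

Lemma winv_r w : w ++ winv w =w= [::].
Proof.
elim: w => [|l w IH]; first exact: ext_refl.
rewrite winv_cons.
have -> : (l :: w) ++ winv w ++ [:: linv l] = [:: l] ++ (w ++ winv w) ++ [:: linv l].
  by rewrite !catA.
by rewrite IH /=; exact: ext_cancel.
Qed.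
Lemma winv_l w : winv w ++ w =w= [::].
Proof. by have := winv_r (winv w); rewrite winvK. Qed.

Lemma ext_winv u v : u =w= v -> winv u =w= winv v.
Proof.
move=> H; transitivity (winv u ++ (v ++ winv v)).
  by rewrite winv_r cats0.
transitivity (winv u ++ (u ++ winv v)).
  by apply: ext_catl; apply: ext_catr; symmetry.
by rewrite catA winv_l.
Qed.

Lemma cancel_left x u v : x ++ u =w= x ++ v -> u =w= v.
Proof.
move=> H; transitivity (winv x ++ x ++ u); first by rewrite catA winv_l.
by rewrite H catA winv_l.
Qed.
Lemma cancel_right y u v : u ++ y =w= v ++ y -> u =w= v.
Proof.
move=> H; transitivity ((u ++ y) ++ winv y); first by rewrite -catA winv_r cats0.
by rewrite H -catA winv_r cats0.
Qed.
Lemma cancel_mid x y u v : x ++ u ++ y =w= x ++ v ++ y -> u =w= v.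
Proof. by move/cancel_left/cancel_right. Qed.

Lemma move_r u v w : u ++ v =w= w -> u =w= w ++ winv v.
Proof. by move=> H; rewrite -H -catA winv_r cats0. Qed.
Lemma move_l u v w : u ++ v =w= w -> v =w= winv u ++ w.
Proof. by move=> H; rewrite -H catA winv_l. Qed.

Definition W n g : word gT := [:: gen n g].
Definition Wi n g : word gT := [:: (true, (n, g))].
Lemma winvW n g : winv (W n g) = Wi n g. Proof. by []. Qed.
Lemma winvWi n g : winv (Wi n g) = W n g. Proof. by []. Qed.
Lemma WWi n g : W n g ++ Wi n g =w= [::]. Proof. exact: (ext_cancel _ _ (gen n g)). Qed.
Lemma WiW n g : Wi n g ++ W n g =w= [::]. Proof. exact: (ext_cancel' (gen n g)). Qed.

Lemma WWi_l n g c : W n g ++ Wi n g ++ c =w= c.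
Proof. by rewrite catA WWi. Qed.
Lemma WiW_l n g c : Wi n g ++ W n g ++ c =w= c.
Proof. by rewrite catA WiW. Qed.
Lemma winv_r_l w c : w ++ winv w ++ c =w= c.
Proof. by rewrite catA winv_r. Qed.
Lemma winv_l_l w c : winv w ++ w ++ c =w= c.
Proof. by rewrite catA winv_l. Qed.

Lemma R1 a n n' g b c : n \in N -> n' \in N -> g \in G ->
  a = n * n' -> b = lconj n n' -> c = lconj n g -> W a g =w= W b c ++ W n g.
Proof. by move=> *; subst; exact: ext_rel1. Qed.
Lemma R2 n a g g' b c : n \in N -> g \in G -> g' \in G ->
  a = g * g' -> b = lconj g n -> c = lconj g g' -> W n a =w= W n g ++ W b c.
Proof. by move=> *; subst; exact: ext_rel2. Qed.
Lemma Rd x : x \in N -> W x x =w= [::].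
Proof. exact: ext_diag. Qed.

Lemma W1g g : g \in G -> W 1 g =w= [::].
Proof.
move=> gG; have H : W 1 g =w= W 1 g ++ W 1 g.
  by apply: (@R1 _ 1 1) => //; gnorm.
by apply: (@cancel_left (W 1 g)); rewrite cats0 -H.
Qed.
Lemma Wn1 n : n \in N -> W n 1 =w= [::].
Proof.
move=> nN; have H : W n 1 =w= W n 1 ++ W n 1.
  by apply: (@R2 _ _ 1 1) => //; gnorm.
by apply: (@cancel_left (W n 1)); rewrite cats0 -H.
Qed.

Definition lcj (x : gT) (l : letter gT) : letter gT :=
  (l.1, (lconj x l.2.1, lconj x l.2.2)).
Definition wconj x (w : word gT) : word gT := map (lcj x) w.

Lemma wconj_cat (x : gT) u v : wconj x (u ++ v) = wconj x u ++ wconj x v.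
Proof. exact: map_cat. Qed.
Lemma lconjM (x y z : gT) : lconj (x * y) z = lconj x (lconj y z).
Proof. by gnorm. Qed.
Lemma lconj1 (z : gT) : lconj 1 z = z. Proof. by gnorm. Qed.
Lemma wconjM (x y : gT) w : wconj (x * y) w = wconj x (wconj y w).
Proof. by rewrite /wconj -map_comp; apply: eq_map => l; rewrite /lcj /= !lconjM. Qed.
Lemma wconj1 w : wconj 1 w = w.
Proof. by rewrite /wconj (eq_map (g := id)) ?map_id // => -[b [n g]]; rewrite /lcj /= !lconj1. Qed.
Lemma wconj_winv x w : wconj x (winv w) = winv (wconj x w).
Proof. by rewrite /wconj /winv map_rev -!map_comp. Qed.
Lemma wconjW x n g : wconj x (W n g) = W (lconj x n) (lconj x g). Proof. by []. Qed.
Lemma wconjWi x n g : wconj x (Wi n g) = Wi (lconj x n) (lconj x g). Proof. by []. Qed.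

Lemma wconj_ext x u v : x \in G -> u =w= v -> wconj x u =w= wconj x v.
Proof.
move=> xG; elim=> {u v}.
- by [].
- by move=> u v _ H; symmetry.
- by move=> u v w _ H1 _ H2; rewrite H1 H2.
- by move=> a b u v _ H; rewrite !wconj_cat H.
- by move=> l; exact: ext_cancel.
- move=> n n' g nN n'N gG; rewrite /wconj /=.
  apply: (@R1 _ (lconj x n) (lconj x n')); rewrite ?lconjN ?lconjG //; gnorm => //.
- move=> n g g' nN gG g'G; rewrite /wconj /=.
  apply: (@R2 _ _ (lconj x g) (lconj x g')); rewrite ?lconjN ?lconjG //; gnorm => //.
- by move=> y yN; rewrite /wconj /=; apply: Rd; rewrite lconjN.
Qed.

Global Instance wconj_proper x : x \in G -> Proper (ext_eq N G ==> ext_eq N G) (wconj x).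
Proof. by move=> xG u v; apply: wconj_ext. Qed.

Definition okl (l : letter gT) : bool := (l.2.1 \in N) && (l.2.2 \in G).
Definition okw (w : word gT) := all okl w.
Lemma okw_cat u v : okw (u ++ v) = okw u && okw v. Proof. exact: all_cat. Qed.
Lemma okw_winv w : okw (winv w) = okw w.
Proof. by rewrite /okw /winv all_rev all_map; apply: eq_all => -[b [n g]]. Qed.
Lemma okw_wconj x w : x \in G -> okw w -> okw (wconj x w).
Proof.
move=> xG; rewrite /okw all_map => /allP H; apply/allP => l /H.
by rewrite /okl /= => /andP[nN gG]; rewrite lconjN ?lconjG.
Qed.

Lemma okwW n g : n \in N -> g \in G -> okw (W n g).
Proof. by move=> nN gG; rewrite /okw /= /okl /= nN gG. Qed.
Lemma okwWi n g : n \in N -> g \in G -> okw (Wi n g).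
Proof. by move=> nN gG; rewrite /okw /= /okl /= nN gG. Qed.

Definition pc (n g : gT) := n * g * n^-1 * g^-1.
Definition kapl (l : letter gT) : gT :=
  if l.1 then (pc l.2.1 l.2.2)^-1 else pc l.2.1 l.2.2.
Definition kap (w : word gT) : gT := foldr (fun l a => kapl l * a) 1 w.
Lemma kap_cat u v : kap (u ++ v) = kap u * kap v.
Proof. by elim: u => [|l u IH] /=; rewrite ?mul1g // IH mulgA. Qed.
Lemma kapW n g : kap (W n g) = pc n g. Proof. by rewrite /= mulg1. Qed.
Lemma kapWi n g : kap (Wi n g) = (pc n g)^-1. Proof. by rewrite /= mulg1. Qed.

Lemma kap_ext u v : u =w= v -> kap u = kap v.
Proof.
elim=> {u v} //.
- by move=> u v w _ -> _ ->.
- by move=> a b u v _ H; rewrite !kap_cat H.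
- by move=> [[] [n g]]; rewrite /kap /kapl /= ?invgK; gnorm.
- by move=> n n' g _ _ _; rewrite /kap /kapl /pc /=; gnorm.
- by move=> n g g' _ _ _; rewrite /kap /kapl /pc /=; gnorm.
- by move=> x _; rewrite /kap /kapl /pc /=; gnorm.
Qed.

Lemma kap_wconj x w : kap (wconj x w) = lconj x (kap w).
Proof.
elim: w => [|[[] [n g]] w IH] /=; first by gnorm.
  by rewrite IH /kapl /pc /=; gnorm.
by rewrite IH /kapl /pc /=; gnorm.
Qed.

Lemma kapN w : okw w -> kap w \in N.
Proof.
elim: w => [|[b [n g]] w IH] /=; first by rewrite group1.
case/andP=> /andP[/= nN gG] /IH kN; rewrite groupM // /kapl /=.
have H : pc n g \in N.
  rewrite /pc -mulgA -(mulgA n) groupM // mulgA.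
  exact: (lconjN gG (groupVr nN)).
by case: b; rewrite ?groupV.
Qed.
Lemma kapG w : okw w -> kap w \in G.
Proof. by move/kapN/inNG. Qed.


Ltac mem := match goal with |- is_true (_ \in _) =>
  first [ done | (apply: lconjN; mem) | (apply: lconjG; mem) | (apply: groupM; mem)
        | (apply: groupVr; mem) | (apply: groupX; mem) | (apply: inNG; mem) ] end.
Ltac side := first [ mem | (gnorm; done) | done ].

Lemma P0 m h n g : m \in N -> h \in G -> n \in N -> g \in G ->
  W m h ++ W (lconj (h*m) n) (lconj (h*m) g) =w=
  W (lconj (m*h) n) (lconj (m*h) g) ++ W m h.
Proof.
move=> mN hG nN gG.
have E1 : W (m*n) (h*g) =w= W (lconj m n) (lconj m h) ++
   (W (lconj (m*h) n) (lconj (m*h) g) ++ (W m h ++ W (lconj h m) (lconj h g))).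
  transitivity (W (lconj m n) (lconj m (h*g)) ++ W m (h*g)).
    by apply: (R1 (n:=m) (n':=n)); side.
  rewrite catA; apply: cat_proper.
    by apply: (R2 (g:=lconj m h) (g':=lconj m g)); side.
  by apply: (R2 (g:=h) (g':=g)); side.
have E2 : W (m*n) (h*g) =w= W (lconj m n) (lconj m h) ++
   (W m h ++ (W (lconj (h*m) n) (lconj (h*m) g) ++ W (lconj h m) (lconj h g))).
  transitivity (W (m*n) h ++ W (lconj h (m*n)) (lconj h g)).
    by apply: (R2 (g:=h) (g':=g)); side.
  rewrite catA; apply: cat_proper.
    by apply: (R1 (n:=m) (n':=n)); side.
  by apply: (R1 (n:=lconj h m) (n':=lconj h n)); side.
apply: (@cancel_mid (W (lconj m n) (lconj m h)) (W (lconj h m) (lconj h g))).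
by rewrite -!catA -E2 -E1.
Qed.


Lemma swap_inv a b c : a ++ b =w= c ++ a -> a ++ winv b =w= winv c ++ a.
Proof.
move=> H; symmetry.
transitivity (winv c ++ (a ++ b) ++ winv b); first by rewrite -!catA winv_r cats0.
by rewrite H -!catA catA winv_l.
Qed.
Lemma swap_inv2 a x y : a ++ x =w= y ++ a -> winv a ++ y =w= x ++ winv a.
Proof.
move=> H.
transitivity (winv a ++ (y ++ a) ++ winv a); first by rewrite -!catA winv_r cats0.
by rewrite -H -!catA catA winv_l.
Qed.

Lemma PL m h n g : m \in N -> h \in G -> n \in N -> g \in G ->
  W m h ++ W n g =w= W (lconj (pc m h) n) (lconj (pc m h) g) ++ W m h.
Proof.
move=> mN hG nN gG.
have := P0 mN hG (n := lconj (h*m)^-1 n) (g := lconj (h*m)^-1 g).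
rewrite -!lconjM mulgV !lconj1.
have -> : m * h * (h * m)^-1 = pc m h by rewrite /pc; gnorm.
move=> -> //; side.
Qed.

Lemma PLw m h w : m \in N -> h \in G -> okw w ->
  W m h ++ w =w= wconj (pc m h) w ++ W m h.
Proof.
move=> mN hG; elim: w => [|[b [n g]] w IH]; first by rewrite cats0.
case/andP=> /andP[nN gG] /IH {}IH; rewrite /= in nN gG.
have -> : (b, (n, g)) :: w = [:: (b, (n,g))] ++ w by [].
rewrite wconj_cat.
have H1 : W m h ++ [:: (b, (n, g))] =w= wconj (pc m h) [:: (b, (n, g))] ++ W m h.
  case: b; last exact: PL.
  by have := swap_inv (PL mN hG nN gG).
transitivity ((W m h ++ [:: (b, (n, g))]) ++ w); first by rewrite catA.
by rewrite H1 -catA IH catA.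
Qed.

Lemma PLiw m h w : m \in N -> h \in G -> okw w ->
  Wi m h ++ w =w= wconj (pc m h)^-1 w ++ Wi m h.
Proof.
move=> mN hG ow.
have pG : (pc m h)^-1 \in G by rewrite groupV /pc; mem.
have H := PLw mN hG (okw_wconj pG ow).
rewrite -wconjM mulgV wconj1 in H.
exact: (swap_inv2 H).
Qed.

Lemma peiffer u w : okw u -> okw w -> u ++ w =w= wconj (kap u) w ++ u.
Proof.
elim: u => [|[b [m h]] u IH] ou ow.
  by rewrite wconj1 cats0.
case/andP: ou => /andP[mN hG] ou; rewrite /= in mN hG.
have {}IH := IH ou ow.
have -> : (b, (m, h)) :: u = [:: (b, (m,h))] ++ u by [].
rewrite -catA IH // catA kap_cat wconjM.
have ow' : okw (wconj (kap u) w) by apply: okw_wconj; rewrite ?kapG.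
case: b.
  by rewrite (PLiw mN hG ow') kapWi -catA.
by rewrite (PLw mN hG ow') kapW -catA.
Qed.


Lemma pcN m h : m \in N -> h \in G -> pc m h \in N.
Proof. by move=> mN hG; rewrite -kapW kapN //= /okl /= mN hG. Qed.
Lemma pcG m h : m \in N -> h \in G -> pc m h \in G.
Proof. by move=> mN hG; rewrite inNG ?pcN. Qed.

Lemma antisym a b : a \in N -> b \in N -> W a b ++ W b a =w= [::].
Proof.
move=> aN bN; set x := b; set y := lconj b^-1 a.
have yN : y \in N by side.
have xG : x \in G by side.
have E0 : W (x*y) (x*y) =w= [::] by apply: Rd; side.
have E1 : W (x*y) (x*y) =w= wconj x (W y (x*y)) ++ W x (x*y).
  by apply: (R1 (n:=x) (n':=y)); side.
have E2 : W x (x*y) =w= W x (lconj x y).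
  transitivity (W x x ++ W (lconj x x) (lconj x y)).
    by apply: (R2 (g:=x) (g':=y)); side.
  by rewrite Rd // (_ : lconj x x = x) //; gnorm.
have E3 : W y (x*y) =w= W y x.
  transitivity (W y x ++ W (lconj x y) (lconj x y)).
    by apply: (R2 (g:=x) (g':=y)); side.
  by rewrite Rd ?cats0 //; side.
rewrite (wconj_ext xG E3) E2 wconjW in E1.
have -> : a = lconj x y by rewrite /x /y; gnorm.
rewrite (_ : lconj x x = x) in E1; last by gnorm.
by rewrite -E1 E0.
Qed.

Lemma Wm1 m g : m \in N -> g \in G -> W m^-1 (lconj m g) =w= Wi m g.
Proof.
move=> mN gG; apply: (@cancel_right (W m g)); rewrite WiW.
transitivity (W 1 g); last exact: W1g.
by symmetry; apply: (R1 (n:=m) (n':=m^-1)); side.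
Qed.

Lemma D8 m h g : m \in N -> h \in G -> g \in G ->
  W (pc m h) g =w= W m h ++ wconj g (Wi m h).
Proof.
move=> mN hG gG.
have kG : pc m h \in G by exact: pcG.
have E1 : W (pc m h) g =w= W (lconj m (lconj h m^-1)) (lconj m g) ++ W m g.
  by apply: (R1 (n:=m) (n':=lconj h m^-1)); rewrite /pc; side.
set g1 := lconj (m*h)^-1 (lconj m g).
have E2 : W (lconj m (lconj h m^-1)) (lconj m g) = wconj (m*h) (W m^-1 g1).
  by rewrite wconjW /g1; congr W; gnorm.
have E3 : W m^-1 g1 =w= Wi m (lconj m^-1 g1).
  by rewrite -Wm1; [rewrite -lconjM mulgV lconj1 | | rewrite /g1]; side.
have E4 : wconj (m*h) (Wi m (lconj m^-1 g1)) = wconj (pc m h) (Wi (lconj h m) g).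
  by rewrite !wconjWi /g1; congr Wi; rewrite /pc; gnorm.
have E5 : W m h ++ Wi (lconj h m) g =w= wconj (pc m h) (Wi (lconj h m) g) ++ W m h.
  by apply: PLw => //; rewrite /okw /= /okl /=; rewrite andbT; apply/andP; split; side.
have E6 : W m g ++ wconj g (W m h) =w= W m h ++ W (lconj h m) g.
  transitivity (W m (g*h)).
    by symmetry; apply: (R2 (g:=g) (g':=h)); side.
  by apply: (R2 (g:=h) (g':=h^-1*g*h)); side.
have E7 : Wi (lconj h m) g =w= wconj g (Wi m h) ++ Wi m g ++ W m h.
  have := ext_winv (move_l (ext_sym E6)).
  by rewrite !winv_cat !winvK -wconj_winv !winvW -?catA.
have mhG : m * h \in G by side.
rewrite E1 E2 (wconj_ext mhG E3) E4.
have E8 : wconj (pc m h) (Wi (lconj h m) g) =w= W m h ++ Wi (lconj h m) g ++ Wi m h.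
  by rewrite catA E5 -catA WWi cats0.
rewrite E8 E7.
by rewrite -!catA WWi_l WiW cats0.
Qed.


Lemma I4W n m h : n \in N -> m \in N -> h \in G ->
  wconj n (W m h) =w= W n (pc m h) ++ W m h.
Proof.
move=> nN mN hG; have kN := pcN mN hG.
have E1 := antisym nN kN.
have E2 := D8 mN hG (inNG nN).
apply: (@cancel_right (Wi m h)); rewrite -catA WWi cats0.
have E3 := move_r E1; rewrite cat0s winvW in E3.
by rewrite E3 -(winvW (pc m h) n) (ext_winv E2) winv_cat -wconj_winv winvWi winvW.
Qed.

Lemma I4Wi n m h : n \in N -> m \in N -> h \in G ->
  wconj n (Wi m h) =w= W n (pc m h)^-1 ++ Wi m h.
Proof.
move=> nN mN hG; have kN := pcN mN hG; have kG := inNG kN.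
rewrite -winvW wconj_winv (ext_winv (I4W nN mN hG)) winv_cat !winvW.
have E1 : W n 1 =w= W n (pc m h) ++ wconj (pc m h) (W n (pc m h)^-1).
  by apply: (R2 (g:=pc m h) (g':=(pc m h)^-1)); side.
rewrite Wn1 // in E1.
have E2 : wconj (pc m h) (W n (pc m h)^-1) =w= W m h ++ W n (pc m h)^-1 ++ Wi m h.
  rewrite catA (PLw mN hG) ?catA ?WWi ?cats0 //.
    by rewrite -catA WWi cats0.
  by rewrite /okw /= /okl /= andbT; apply/andP; split; side.
rewrite E2 in E1.
apply: (@cancel_left (W n (pc m h) ++ W m h)).
by rewrite -!catA WWi_l WWi -E1.
Qed.

Lemma kap1 l : kap [:: l] = kapl l. Proof. by rewrite /= mulg1. Qed.

Lemma I4 n w : n \in N -> okw w -> wconj n w =w= W n (kap w) ++ w.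
Proof.
move=> nN; elim: w => [|[b [m h]] w IH] ow.
  by rewrite Wn1.
case/andP: ow => /andP[mN hG] ow; rewrite /= in mN hG.
have {}IH := IH ow.
have -> : (b, (m, h)) :: w = [:: (b, (m,h))] ++ w by [].
have ol : okw [:: (b, (m,h))] by rewrite /okw /= /okl /= mN hG.
have E1 : wconj n [:: (b, (m,h))] =w= W n (kap [:: (b, (m,h))]) ++ [:: (b, (m,h))].
  by rewrite kap1 /kapl /=; case: b ol => _; [apply: I4Wi | apply: I4W].
rewrite wconj_cat E1 IH kap_cat.
have kG : kap [:: (b, (m,h))] \in G by apply: kapG.
have kwG : kap w \in G by apply: kapG.
transitivity (W n (kap [:: (b, (m, h))]) ++ wconj (kap [:: (b, (m, h))]) (W n (kap w)) ++ [:: (b, (m,h))] ++ w).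
  rewrite -!catA; apply: ext_catl.
  by rewrite catA (peiffer (w := W n (kap w)) ol) ?okwW // -catA.
rewrite wconjW catA; apply: ext_catr; symmetry.
by apply: (R2 (g:=kap [:: (b, (m, h))]) (g':=kap w)); side.
Qed.


Definition aw (A : {set gT}) (w : word gT) : bool :=
  all (fun l : letter gT => (l.2.1 \in A) && (l.2.2 \in G)) w.
Lemma aw_okw (A : {set gT}) w : A \subset N -> aw A w -> okw w.
Proof.
move=> sAN /allP H; apply/allP => l /H /andP[aA gG].
by rewrite /okl gG (subsetP sAN).
Qed.
Lemma aw_cat (A : {set gT}) u v : aw A (u ++ v) = aw A u && aw A v.
Proof. exact: all_cat. Qed.
Lemma aw_winv (A : {set gT}) w : aw A (winv w) = aw A w.
Proof. by rewrite /aw /winv all_rev all_map; apply: eq_all => -[b [n g]]. Qed.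
Lemma aw_wconj (A : {group gT}) x w : A <| G -> x \in G -> aw A w -> aw A (wconj x w).
Proof.
move=> nAG xG; rewrite /aw all_map => /allP H; apply/allP => l /H /andP[aA gG] /=.
rewrite lconjG // andbT.
have -> : lconj x l.2.1 = l.2.1 ^ x^-1 by rewrite conjgE invgK /lconj mulgA.
by rewrite memJ_norm // groupV (subsetP (normal_norm nAG)).
Qed.

Definition wpow (w : word gT) n : word gT := flatten (nseq n w).
Lemma wpow0 w : wpow w 0 = [::]. Proof. by []. Qed.
Lemma wpowS w n : wpow w n.+1 = w ++ wpow w n. Proof. by []. Qed.
Lemma wpowD w m n : wpow w (m + n) = wpow w m ++ wpow w n.
Proof. by elim: m => [|m IH] //; rewrite addSn !wpowS IH catA. Qed.
Lemma wpowSr w n : wpow w n.+1 = wpow w n ++ w.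
Proof. by rewrite -addn1 wpowD wpowS wpow0 cats0. Qed.
Lemma wpowM w m n : wpow w (m * n) = wpow (wpow w m) n.
Proof. by elim: n => [|n IH]; rewrite ?muln0 // mulnS wpowD IH. Qed.
Lemma wconj_wpow x w n : wconj x (wpow w n) = wpow (wconj x w) n.
Proof. by elim: n => [|n IH] //=; rewrite wpowS wconj_cat IH. Qed.
Lemma winv_wpow w n : winv (wpow w n) = wpow (winv w) n.
Proof. by elim: n => [|n IH] //; rewrite wpowS winv_cat IH -wpowSr. Qed.
Lemma aw_wpow (A : {set gT}) w n : aw A w -> aw A (wpow w n).
Proof. by move=> H; elim: n => [|n IH] //; rewrite wpowS aw_cat H. Qed.
Lemma okw_wpow w n : okw w -> okw (wpow w n).
Proof. by move=> H; elim: n => [|n IH] //; rewrite wpowS okw_cat H. Qed.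

Lemma ext_wpow u v n : u =w= v -> wpow u n =w= wpow v n.
Proof. by move=> H; elim: n => [|n IH] //; rewrite !wpowS; apply: cat_proper. Qed.
Global Instance wpow_proper : Proper (ext_eq N G ==> eq ==> ext_eq N G) wpow.
Proof. by move=> u v H n _ <-; apply: ext_wpow. Qed.

Inductive extB (B : {set gT}) : word gT -> word gT -> Prop :=
  | eB_ext u v : u =w= v -> extB B u v
  | eB_kill c g : c \in B -> g \in G -> extB B [:: gen c g] [::]
  | eB_sym u v : extB B u v -> extB B v u
  | eB_trans u v w : extB B u v -> extB B v w -> extB B u w
  | eB_ctx a b u v : extB B u v -> extB B (a ++ u ++ b) (a ++ v ++ b).

Section ModB.
Variable B : {group gT}.
Hypothesis nBG : B <| G.
Hypothesis sBN : B \subset N.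
Local Notation "u =b= v" := (extB B u v) (at level 70).

Global Instance extB_equiv : Equivalence (extB B).
Proof.
split; [by move=> u; apply: eB_ext | exact: eB_sym | exact: eB_trans].
Qed.
#[local] Hint Extern 0 (extB _ _ _) => reflexivity : core.
Global Instance extB_cat : Proper (extB B ==> extB B ==> extB B) (@cat (letter gT)).
Proof.
move=> u u' Hu v v' Hv; transitivity (u' ++ v).
  by have := eB_ctx [::] v Hu; rewrite /=.
by have := eB_ctx u' [::] Hv; rewrite !cats0.
Qed.
Global Instance extB_sub : subrelation (ext_eq N G) (extB B).
Proof. by move=> u v; apply: eB_ext. Qed.

Lemma extB_winv u v : u =b= v -> winv u =b= winv v.
Proof.
move=> H; transitivity (winv u ++ (v ++ winv v)).
  by apply: eB_ext; rewrite winv_r cats0.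
transitivity (winv u ++ (u ++ winv v)).
  apply: extB_cat; first reflexivity.
  by apply: extB_cat; [symmetry | reflexivity].
by apply: eB_ext; rewrite catA winv_l.
Qed.
Lemma extB_wpow u v n : u =b= v -> wpow u n =b= wpow v n.
Proof. by move=> H; elim: n => [|n IH] //; rewrite !wpowS; apply: extB_cat. Qed.
Global Instance wpowB_proper : Proper (extB B ==> eq ==> extB B) wpow.
Proof. by move=> u v H n _ <-; apply: extB_wpow. Qed.
Lemma lconjB x c : x \in G -> c \in B -> lconj x c \in B.
Proof.
move=> xG cB; have -> : lconj x c = c ^ x^-1 by rewrite conjgE invgK /lconj mulgA.
by rewrite memJ_norm // groupV (subsetP (normal_norm nBG)).
Qed.
Lemma extB_wconj x u v : x \in G -> u =b= v -> wconj x u =b= wconj x v.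
Proof.
move=> xG; elim=> {u v}.
- by move=> u v H; apply: eB_ext; apply: wconj_ext.
- by move=> c g cB gG; apply: eB_kill; [apply: lconjB | apply: lconjG].
- by move=> u v _ H; symmetry.
- by move=> u v w _ H1 _ H2; rewrite H1 H2.
- by move=> a b u v _ H; rewrite !wconj_cat H.
Qed.

Lemma killW c g : c \in B -> g \in G -> W c g =b= [::].
Proof. exact: eB_kill. Qed.
Lemma killWi c g : c \in B -> g \in G -> Wi c g =b= [::].
Proof. by move=> cB gG; rewrite -winvW; apply: (extB_winv (killW cB gG)). Qed.
Lemma inBN c : c \in B -> c \in N. Proof. exact: (subsetP sBN). Qed.

Definition proj (w : word gT) := filter okl w.
Lemma proj_cat u v : proj (u ++ v) = proj u ++ proj v. Proof. exact: filter_cat. Qed.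
Lemma proj_okw w : okw w -> proj w = w. Proof. exact: all_filterP. Qed.
Lemma proj_ext u v : u =w= v -> proj u =w= proj v.
Proof.
elim=> {u v} //.
- by move=> u v _ H; symmetry.
- by move=> u v w _ H1 _ H2; rewrite H1 H2.
- by move=> a b u v _ H; rewrite !proj_cat H.
- move=> [b [n g]]; rewrite /proj /= /okl /=; case: (_ && _) => //=.
  exact: (ext_cancel _ _ (b, (n, g))).
- move=> n n' g nN n'N gG; rewrite !proj_okw; first exact: ext_rel1.
    by rewrite /okw /= /okl /= !andbT; apply/andP; split; apply/andP; split; side.
  by rewrite /okw /= /okl /= !andbT; apply/andP; split; side.
- move=> n g g' nN gG g'G; rewrite !proj_okw; first exact: ext_rel2.
    by rewrite /okw /= /okl /= !andbT; apply/andP; split; apply/andP; split; side.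
  by rewrite /okw /= /okl /= !andbT; apply/andP; split; side.
- move=> x xN; rewrite proj_okw; first exact: ext_diag.
  by rewrite /okw /= /okl /= !andbT; apply/andP; split; side.
Qed.

Lemma extB_exists u v : u =b= v ->
  exists2 l, aw B l & proj u =w= l ++ proj v.
Proof.
elim=> {u v}.
- by move=> u v H; exists [::] => //; apply: proj_ext.
- move=> c g cB gG; exists [:: gen c g]; first by rewrite /aw /= cB gG.
  by rewrite cats0 proj_okw //; apply: okwW => //; apply: inBN.
- move=> u v _ [l lB H]; exists (winv l); first by rewrite aw_winv.
  by rewrite H catA winv_l.
- move=> u v w _ [l1 l1B H1] _ [l2 l2B H2]; exists (l1 ++ l2); first by rewrite aw_cat l1B.
  by rewrite H1 H2 catA.
- move=> a b u v _ [l lB H].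
  have oa : okw (proj a) by apply/allP => x; rewrite mem_filter => /andP[].
  have ol : okw l by apply: (aw_okw sBN).
  exists (wconj (kap (proj a)) l); first by apply: aw_wconj => //; apply: kapG.
  by rewrite !proj_cat H -!catA catA (peiffer oa ol) -!catA.
Qed.

Lemma extB_nil w : okw w -> w =b= [::] -> exists2 l, aw B l & w =w= l.
Proof.
move=> ow /extB_exists [l lB]; rewrite proj_okw // cats0 => H.
by exists l.
Qed.


Lemma antisymW a x : a \in N -> x \in N -> W a x =w= Wi x a.
Proof. by move=> aN xN; have := move_r (antisym aN xN); rewrite cat0s winvW. Qed.

Lemma E2W c n g : c \in B -> n \in N -> g \in G -> wconj c (W n g) =b= W n g.
Proof.
move=> cB nN gG; have cN := inBN cB.
set c' := lconj n^-1 c.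
have c'B : c' \in B by apply: lconjB => //; side.
have H1 : W (c*n) g =w= wconj c (W n g) ++ W c g.
  by apply: (R1 (n:=c) (n':=n)); side.
have H2 : W (c*n) g =w= W c (lconj n g) ++ W n g.
  apply: (R1 (n:=n) (n':=c')); try side; rewrite /c'; gnorm => //.
transitivity (wconj c (W n g) ++ W c g).
  by rewrite (killW cB gG) cats0.
by rewrite -H1 H2 (killW cB (lconjG (inNG nN) gG)).
Qed.

Lemma E2w c w : c \in B -> okw w -> wconj c w =b= w.
Proof.
move=> cB; elim: w => [|[b [n g]] w IH] // /andP[/andP[nN gG] ow]; rewrite /= in nN gG.
have -> : (b, (n, g)) :: w = [:: (b, (n,g))] ++ w by [].
rewrite wconj_cat IH //; apply: extB_cat => //.
case: b.
  change [:: (true, (n, g))] with (Wi n g).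
  by rewrite -winvW wconj_winv; apply: extB_winv; apply: E2W.
exact: E2W.
Qed.

Section P2.
Variables (A : {group gT}) (p : nat).
Hypothesis nAG : A <| G.
Hypothesis sAN : A \subset N.
Hypothesis oddp : odd p.
Hypothesis powB : forall a, a \in A -> a ^+ p \in B.
Hypothesis comB : forall a b, a \in A -> b \in A -> pc a b \in B.

Lemma inAN a : a \in A -> a \in N. Proof. exact: (subsetP sAN). Qed.
Lemma lconjA x a : x \in G -> a \in A -> lconj x a \in A.
Proof.
move=> xG aA; have -> : lconj x a = a ^ x^-1 by rewrite conjgE invgK /lconj mulgA.
by rewrite memJ_norm // groupV (subsetP (normal_norm nAG)).
Qed.
Lemma pcA a g : a \in A -> g \in G -> pc a g \in A.
Proof.
move=> aA gG; have -> : pc a g = a * lconj g a^-1 by rewrite /pc /lconj !mulgA.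
by rewrite groupM ?lconjA ?groupV.
Qed.
Lemma kapA w : aw A w -> kap w \in A.
Proof.
elim: w => [|[b [n g]] w IH] /=; first by rewrite group1.
case/andP=> /andP[/= nA gG] /IH kA; rewrite groupM // /kapl /=.
by case: b; rewrite ?groupV pcA.
Qed.

Lemma E4 a k : a \in A -> k \in A -> wconj a (W a k) =b= W a k.
Proof.
move=> aA kA; have aN := inAN aA; have kN := inAN kA.
rewrite I4W //; last exact: inNG.
rewrite antisymW ?pcN ?inNG // killWi ?comB //; side.
Qed.

Lemma E4pow a k j : a \in A -> k \in A -> W (a ^+ j) k =b= wpow (W a k) j.
Proof.
move=> aA kA; have aN := inAN aA; have kG := inNG (inAN kA).
elim: j => [|j IH]; first by rewrite expg0 W1g.
have H : W (a ^+ j.+1) k =w= wconj a (W (a ^+ j) k) ++ W a k.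
  by apply: (R1 (n:=a) (n':=a ^+ j)); rewrite ?expgS; side.
rewrite H (extB_wconj (inNG aN) IH) wconj_wpow (E4 aA kA) wpowSr //.
Qed.

Lemma E5 a g : a \in A -> g \in G -> wpow (W a (pc a g)) p =b= [::].
Proof.
move=> aA gG; rewrite -E4pow ?pcA //.
by apply: killW; [apply: powB | apply: inNG; apply: inAN; apply: pcA].
Qed.

Lemma E7 a g : a \in A -> g \in G ->
  W a g ++ W a (pc a g) =b= W a (pc a g) ++ W a g.
Proof.
move=> aA gG; have aN := inAN aA; set k := pc a g.
have kA : k \in A by apply: pcA.
have kN := inAN kA; have kG := inNG kN.
rewrite (peiffer (okwW aN gG) (okwW aN kG)) kapW wconjW.
apply: extB_cat => //.
have -> : lconj (pc a g) k = k by rewrite /k /pc; gnorm.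
have H : W (lconj k a) k =w= wconj (pc k a) (W a k) ++ W (pc k a) k.
  by apply: (R1 (n:=pc k a) (n':=a)); rewrite /pc; side.
rewrite H (killW (comB kA aA) kG) cats0.
by apply: E2W => //; apply: comB.
Qed.

Lemma comm_pow x y n : x ++ y =b= y ++ x -> x ++ wpow y n =b= wpow y n ++ x.
Proof.
move=> H; elim: n => [|n IH]; first by rewrite cats0.
by rewrite wpowS catA H -catA IH catA.
Qed.
Lemma pow_commute x y n : x ++ y =b= y ++ x -> wpow (x ++ y) n =b= wpow x n ++ wpow y n.
Proof.
move=> H; elim: n => [|n IH] //.
rewrite wpowSr IH !wpowSr -!catA; apply: extB_cat => //.
rewrite !catA; apply: extB_cat => //.
by symmetry; apply: comm_pow.
Qed.

Lemma bin2_odd q : odd q -> 'C(q, 2) = (q * q.-1./2)%N.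
Proof.
case: q => // q /= oq.
by rewrite bin2 /= -{2}(odd_double_half q) (negbTE oq) add0n -doubleMr doubleK.
Qed.

Lemma binS2 j : 'C(j.+1, 2) = 'C(j, 2) + j.
Proof. by rewrite binS bin1. Qed.

Lemma E8 a g j : a \in A -> g \in G ->
  W (a ^+ j) g =b= wpow (W a (pc a g)) 'C(j, 2) ++ wpow (W a g) j.
Proof.
move=> aA gG; have aN := inAN aA; set k := pc a g.
have kA : k \in A by apply: pcA.
have kN := inAN kA; have kG := inNG kN.
elim: j => [|j IH]; first by rewrite expg0 W1g.
have H : W (a ^+ j.+1) g =w= wconj a (W (a ^+ j) g) ++ W a g.
  by apply: (R1 (n:=a) (n':=a ^+ j)); rewrite ?expgS; side.
rewrite H (extB_wconj (inNG aN) IH) wconj_cat !wconj_wpow (E4 aA kA).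
rewrite (I4W aN aN gG) -/k.
rewrite (pow_commute _ (eB_sym (E7 aA gG))) binS2 wpowD wpowSr -!catA.
by [].
Qed.

Lemma E9 a g : a \in A -> g \in G -> wpow (W a g) p =b= [::].
Proof.
move=> aA gG.
have H := E8 p aA gG.
rewrite killW ?powB // in H.
have Hc : wpow (W a (pc a g)) 'C(p, 2) =b= [::].
  rewrite bin2_odd // wpowM E5 //.
  by elim: (p.-1)./2 => [|m IH] //; rewrite wpowS IH.
by rewrite H Hc.
Qed.


Lemma E9i a g : a \in A -> g \in G -> wpow (Wi a g) p =b= [::].
Proof.
by move=> aA gG; rewrite -winvW -winv_wpow; apply: (extB_winv (E9 aA gG)).
Qed.

Lemma E11 a b u : a \in A -> b \in A -> okw u -> W a b ++ u =b= u ++ W a b.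
Proof.
move=> aA bA ou; have aN := inAN aA; have bG := inNG (inAN bA).
rewrite (peiffer (okwW aN bG) ou) kapW.
by apply: extB_cat => //; apply: E2w => //; apply: comB.
Qed.

Lemma E12 a b : a \in A -> b \in A -> wpow (W a b) p =b= [::].
Proof.
move=> aA bA; rewrite -E4pow //; apply: killW; first exact: powB.
exact: inNG (inAN bA).
Qed.

Lemma E10 x y : okw x -> okw y -> y ++ x =w= W (kap y) (kap x) ++ x ++ y.
Proof.
move=> ox oy; rewrite (peiffer oy ox) (I4 (kapN oy) ox) -catA //.
Qed.

Lemma class2 x y c n : y ++ x =b= c ++ x ++ y -> c ++ x =b= x ++ c ->
  c ++ y =b= y ++ c ->
  wpow (x ++ y) n =b= wpow c 'C(n, 2) ++ wpow x n ++ wpow y n.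
Proof.
move=> Hyx Hcx Hcy.
have L1 : forall m, wpow y m ++ x =b= wpow c m ++ x ++ wpow y m.
  elim=> [|m IH]; first by rewrite cats0.
  have Hc' : wpow y m ++ c =b= c ++ wpow y m by symmetry; apply: comm_pow.
  rewrite wpowSr -catA Hyx !catA Hc' -!catA (catA (wpow y m) x) IH -!catA.
  by [].
elim: n => [|n IH] //.
rewrite wpowSr IH binS2 wpowD !wpowSr -!catA; apply: extB_cat => //.
rewrite (catA (wpow y n) x) L1 -!catA catA.
have Hxc : wpow x n ++ wpow c n =b= wpow c n ++ wpow x n.
  by apply: comm_pow; symmetry; apply: comm_pow.
by rewrite Hxc -!catA.
Qed.

Lemma E13 w : aw A w -> wpow w p =b= [::].
Proof.
elim: w => [|l w IH] aww; first by elim: p => [|q IHq] //.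
case/andP: aww => al aww.
have -> : l :: w = [:: l] ++ w by [].
have al' : aw A [:: l] by rewrite /aw /= al.
have ol := aw_okw sAN al'; have ow := aw_okw sAN aww.
have Hyx := eB_ext B (E10 ol ow).
have kwA := kapA aww; have klA := kapA al'.
rewrite (class2 p Hyx (E11 kwA klA ol) (E11 kwA klA ow)).
rewrite bin2_odd // wpowM (E12 kwA klA) (IH aww).
have -> : wpow [::] (p.-1)./2 = [::] by elim: (p.-1)./2.
rewrite cats0 /=.
case: l al {al' ol Hyx klA} => -[] [m h] /andP[/= mA hG].
  by apply: E9i.
by apply: E9.
Qed.

End P2.

End ModB.


Section Final.
Variable p : nat.
Hypothesis pr : prime p.
Hypothesis oddp : odd p.
Hypothesis pG : p.-group G.
Hypothesis powN : [~: N, N] \subset pp p N.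

Fixpoint Ns i : {group gT} := if i is i'.+1 then pp p (Ns i') else N.

Lemma Ns_props i : [/\ Ns i <| G, Ns i \subset N & [~: Ns i, Ns i] \subset pp p (Ns i)].
Proof.
elim: i => [|i [nG sN pw]] /=; first by rewrite nNG subxx powN.
split; first exact: pp_normal.
  exact: subset_trans (pp_sub _ _) sN.
apply: powerful_pp => //.
apply: (pgroup_nil (p := p)); apply: pgroupS sN _.
exact: pgroupS (normal_sub nNG) pG.
Qed.

Lemma Ns_pow i y : y \in Ns i -> exists2 x, x \in N & y = x ^+ (p ^ i).
Proof.
elim: i y => [|i IH] y /=; first by move=> yN; exists y; rewrite ?expn0 ?expg1.
move=> yP; have [nG sN pw] := Ns_props i.
have pNi : p.-group (Ns i).
  by apply: pgroupS sN _; exact: pgroupS (normal_sub nNG) pG.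
have [z zNi ->] := LM oddp pr (leqnn _) pNi pw yP.
have [x xN ->] := IH z zNi.
by exists x => //; rewrite -expgM expnSr.
Qed.

Lemma Ns_words i w : aw N w -> exists2 l, aw (Ns i) l & wpow w (p ^ i) =w= l.
Proof.
move=> aww; elim: i => [|i [l al H]]; first by exists w; rewrite ?expn0 /wpow /= ?cats0.
have [nG sN pw] := Ns_props i.
have [nG' sN' _] := Ns_props i.+1.
have powB : forall a, a \in Ns i -> a ^+ p \in Ns i.+1 by move=> a aA; apply: mem_pp.
have comB : forall a b, a \in Ns i -> b \in Ns i -> pc a b \in Ns i.+1.
  move=> a b aA bA; have -> : pc a b = [~ a^-1, b^-1] by rewrite /pc /commg /conjg !invgK !mulgA.
  by apply: (subsetP pw); apply: mem_commg; rewrite groupV.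
have E := E13 nG' sN' nG sN oddp powB comB al.
have ol : okw (wpow l p) by apply: okw_wpow; apply: aw_okw sN al.
have [l' al' H'] := extB_nil nG' sN' ol E.
by exists l' => //; rewrite expnSr wpowM H H'.
Qed.

Lemma aw1_nil l : aw [1 gT] l -> l =w= [::].
Proof.
elim: l => [|[b [n g]] l IH] //= /andP[/andP[/= n1 gG] al].
move: n1; rewrite inE => /eqP ->.
have -> : (b, (1, g)) :: l = [:: (b, (1,g))] ++ l by [].
rewrite IH // cats0.
case: b; last exact: W1g.
by change (Wi 1 g =w= [::]); rewrite -winvW; apply: (ext_winv (W1g gG)).
Qed.

Lemma final w : aw N w -> wpow w (exponent N) =w= [::].
Proof.
move=> aww.
have pN : p.-group N by exact: pgroupS (normal_sub nNG) pG.
have pE : p.-nat (exponent N) by rewrite pnat_exponent.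
have [k Ek] := p_natP pE.
have [l al H] := Ns_words k aww.
rewrite Ek H; apply: aw1_nil.
apply/allP => x /(allP al) /andP[yNk gG]; apply/andP; split => //.
have [z zN ->] := Ns_pow yNk.
by rewrite -Ek expg_exponent // group1.
Qed.

End Final.

End Words.

Theorem theorem4p5 (p : nat) (gT : finGroupType) (G N : {group gT}) :
  prime p -> odd p -> p.-group G -> N <| G -> powerful p N ->
  ext_exp_dvd N G (exponent N).
Proof.
move=> pr oddp pG nNG powN w ow.
exact: (final nNG pr oddp pG powN ow).
Qed.
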